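(* The sequence $\{\rho^m(S(i))\}$, where $i$ ranges over the integers $i\ge 7$ with $i\equiv 3\pmod 4$, is unbounded. In particular, $\rho^m(\mathfrak{N})=\infty$.
   Context: $\mathbb{N}$ denotes the non-negative integers. A numerical semigroup is a submonoid of $(\mathbb{N},+)$ with finite complement; $\mathfrak{N}$ denotes the set of all numerical semigroups. A numerical semigroup is irreducible if it cannot be written as the intersection of two numerical semigroups properly containing it. For an odd integer $j\ge 3$, $T(j)=\{0,\tfrac{j+1}{2},\tfrac{j+1}{2}+1,\dots,j-1\}\cup\{n\in\mathbb{Z}:n\ge j+1\}$. For odd $i\ge5$, $S(i)=\langle 2,i\rangle\cap T(i)$, where $\langle 2,i\rangle=\{2x+iy:x,y\in\mathbb{N}\}$. Given a numerical semigroup $S$ and irreducible numerical semigroups $S_1,\dots,S_n$, the expression $S_1\cap\dots\cap S_n$ is a factorization of $S$ (of length $n$) if $S=S_1\cap\dots\cap S_n$ and $S\neq\bigcap_{j\in J}S_j$ for every nonempty proper subset $J\subsetneq\{1,\dots,n\}$. $\mathsf{L}^m(S)$ is the set of positive integers $n$ such that $S$ has a factorization of length $n$. The elasticity is $\rho^m(S)=\sup\mathsf{L}^m(S)/\min\mathsf{L}^m(S)$, and $\rho^m(\mathfrak{N})=\sup\{\rho^m(S):S\in\mathfrak{N}\}$. *)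

(* Defs.v *)
From mathcomp Require Import all_boot all_order all_algebra.
From mathcomp Require Import boolp classical_sets reals constructive_ereal ereal.
Set Implicit Arguments. Unset Strict Implicit. Unset Printing Implicit Defensive.
Import Order.TTheory GRing.Theory Num.Theory.
Local Open Scope classical_set_scope.

Definition numsg (S : set nat) : Prop :=
  S 0%N /\ (forall a b, S a -> S b -> S (a + b)%N) /\
  exists N, forall n, (N <= n)%N -> S n.

Definition irreducible_sg (S : set nat) : Prop :=
  numsg S /\
  ~ (exists S1 S2 : set nat, numsg S1 /\ numsg S2 /\
       S `<` S1 /\ S `<` S2 /\ S = S1 `&` S2).

Definition bigcap_fam n (F : 'I_n -> set nat) (J : {set 'I_n}) : set nat :=
  [set x | forall j, j \in J -> F j x].

Definition is_factorization (S : set nat) n (F : 'I_n -> set nat) : Prop :=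
  (forall j, irreducible_sg (F j)) /\
  S = bigcap_fam F (finset.setTfor 'I_n) /\
  (forall J : {set 'I_n}, J != finset.set0 -> J \proper (finset.setTfor 'I_n) -> S <> bigcap_fam F J).

Definition Lm (S : set nat) : set nat :=
  [set n | (0 < n)%N /\ exists F : 'I_n -> set nat, is_factorization S F].

Definition rhom (R : realType) (S : set nat) : \bar R :=
  (ereal_sup [set (n%:R : R)%:E | n in Lm S] *
   ((fine (ereal_inf [set (n%:R : R)%:E | n in Lm S]))^-1)%:E)%E.

Definition rhom_all (R : realType) : \bar R :=
  ereal_sup [set rhom R S | S in numsg].

Definition Tsg (j : nat) : set nat :=
  [set n | n = 0%N \/ ((j.+1 %/ 2 <= n)%N /\ (n <= j.-1)%N) \/ (j.+1 <= n)%N].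

Definition gen2 (i : nat) : set nat :=
  [set n | exists x y, n = (2 * x + i * y)%N].

Definition Ssg (i : nat) : set nat := gen2 i `&` Tsg i.

(* Main.v *)
Require Import Defs.
From mathcomp Require Import all_boot all_order all_algebra.
From mathcomp Require Import boolp classical_sets reals constructive_ereal ereal.
From mathcomp Require Import zify lra.
Local Open Scope classical_set_scope.
Import Order.TTheory GRing.Theory Num.Theory.

Lemma Tsg_odd m j n : j = (2 * m + 1)%N ->
  (Tsg j n <-> (n = 0 \/ (m + 1 <= n /\ n <= 2 * m) \/ 2 * m + 2 <= n)%N).
Proof. move=> ->; rewrite /Tsg /=; split => h; lia. Qed.

Lemma gen2_odd p i n : i = (2 * p + 1)%N ->
  (gen2 i n <-> (n %% 2 = 0 \/ 2 * p + 1 <= n)%N).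
Proof.
move=> ->; rewrite /gen2 /=; split.
  move=> [x [[|y] ->]]; first by left; lia.
  right; have := leq_pmulr (2 * p + 1) (ltn0Sn y); lia.
case: (boolP (n %% 2 == 0)) => /eqP h H.
  by exists (n %/ 2), 0; lia.
have ? : (2 * p + 1 <= n)%N by lia.
by exists ((n - (2 * p + 1)) %/ 2), 1; lia.
Qed.

Lemma irr_crit S F0 : numsg S -> ~ S F0 ->
  (forall g, ~ S g -> S (F0 - g)%N /\ (g <= F0)%N) -> irreducible_sg S.
Proof.
move=> hS hF hg; split => //.
move=> [S1 [S2 [[_ [c1 _]] [[_ [c2 _]] [[s1 n1] [[s2 n2] e]]]]]].
have key : forall T, S `<=` T -> ~ T `<=` S -> (forall a b, T a -> T b -> T (a + b)%N) -> T F0.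
  move=> T sT nT cT.
  have [g [Tg ng]] : exists g, T g /\ ~ S g.
    apply: contrapT => hne; apply: nT => g Tg; apply: contrapT => hn; apply: hne; by exists g.
  have [h1 h2] := hg g ng.
  by rewrite -(subnKC h2); apply: cT => //; apply: sT.
apply: hF; rewrite e; split; [exact: key | exact: key].
Qed.

Lemma min_crit S n (F : 'I_n -> set nat) :
  (forall j0, exists x, ~ S x /\ forall j, j != j0 -> F j x) ->
  forall J : {set 'I_n}, J != finset.set0 -> J \proper (finset.setTfor 'I_n) -> S <> bigcap_fam F J.
Proof.
move=> h J _ /properP [_ [j0 _ hj0]] e.
have [x [hx hF]] := h j0.
apply: hx; rewrite e => j hj; apply: hF; apply/eqP => ej; subst j.
by rewrite hj in hj0.
Qed.

Lemma fact_crit S n (F : 'I_n -> set nat) :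
  (forall j, irreducible_sg (F j)) ->
  (forall x, S x <-> forall j, F j x) ->
  (forall j0, exists x, ~ S x /\ forall j, j != j0 -> F j x) ->
  is_factorization S F.
Proof.
move=> hi he hm; split => //; split; last exact: min_crit.
apply: funext => x; apply: propext; rewrite he /bigcap_fam /=; split.
  by move=> h j _; apply: h.
by move=> h j; apply: h; rewrite finset.in_setT.
Qed.

Lemma Tsg_irr m : irreducible_sg (Tsg (2 * m + 1)).
Proof.
have E n := @Tsg_odd m _ n (erefl _).
apply: (@irr_crit _ (2 * m + 1)).
- split; first by apply/E; lia.
  split; first by move=> a b /E ha /E hb; apply/E; lia.
  by exists (2 * m + 2) => n hn; apply/E; lia.
- by move/E; lia.
- by move=> g /E hg; split; [apply/E|]; lia.
Qed.

Lemma gen2_irr p : (0 < p)%N -> irreducible_sg (gen2 (2 * p + 1)).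
Proof.
move=> hp.
have E n := @gen2_odd p _ n (erefl _).
apply: (@irr_crit _ (2 * p - 1)).
- split; first by apply/E; lia.
  split; first by move=> a b [x1 [y1 ->]] [x2 [y2 ->]]; exists (x1 + x2), (y1 + y2); lia.
  by exists (2 * p + 1) => n hn; apply/E; lia.
- by move/E; lia.
- by move=> g /E hg; split; [apply/E|]; lia.
Qed.

Lemma Ssg_char k n : Ssg (4 * k + 3) n <->
  ((n %% 2 = 0 \/ 4 * k + 3 <= n) /\ (n = 0 \/ (2 * k + 2 <= n /\ n <= 4 * k + 2) \/ 4 * k + 4 <= n))%N.
Proof.
have E1 := @gen2_odd (2 * k + 1) (4 * k + 3) n ltac:(lia).
have E2 := @Tsg_odd (2 * k + 1) (4 * k + 3) n ltac:(lia).
rewrite /Ssg /=; split.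
  by move=> [/E1 h1 /E2 h2]; lia.
by move=> [h1 h2]; split; [apply/E1|apply/E2]; lia.
Qed.

Lemma Ssg_numsg k : numsg (Ssg (4 * k + 3)).
Proof.
have E := Ssg_char k.
split; first by apply/E; lia.
split; first by move=> a b /E ha /E hb; apply/E; lia.
by exists (4 * k + 4) => n hn; apply/E; lia.
Qed.

Lemma Lm2 k : (0 < k)%N -> Lm (Ssg (4 * k + 3)) 2.
Proof.
move=> hk; split => //.
exists (fun j : 'I_2 => if val j == 0 then gen2 (4 * k + 3) else Tsg (4 * k + 3)).
apply: fact_crit.
- case=> [[|[|j]] hj] //=.
    by rewrite (_ : 4 * k + 3 = 2 * (2 * k + 1) + 1)%N; [apply: gen2_irr|]; lia.
  by rewrite (_ : 4 * k + 3 = 2 * (2 * k + 1) + 1)%N; [apply: Tsg_irr|]; lia.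
- move=> x; split.
    by move=> [h1 h2] [[|[|j]] hj].
  by move=> h; split; [apply: (h (@Ordinal 2 0 isT)) | apply: (h (@Ordinal 2 1 isT))].
- have E1 n := @gen2_odd (2 * k + 1) (4 * k + 3) n ltac:(lia).
  have E2 n := @Tsg_odd (2 * k + 1) (4 * k + 3) n ltac:(lia).
  case=> [[|[|j0]] hj0] //=.
  + exists (2 * k + 3); split; first by move/Ssg_char; lia.
    case=> [[|[|j]] hj] //= _; apply/E2; lia.
  + exists 2; split; first by move/Ssg_char; lia.
    case=> [[|[|j]] hj] //= _; apply/E1; lia.
Qed.

Lemma Lmk k : (0 < k)%N -> Lm (Ssg (4 * k + 3)) k.+1.
Proof.
move=> hk; split => //.
exists (fun j : 'I_k.+1 => Tsg (2 * k + 3 + 2 * j)).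
apply: fact_crit.
- move=> j; rewrite (_ : 2 * k + 3 + 2 * j = 2 * (k + 1 + j) + 1)%N; last lia.
  exact: Tsg_irr.
- move=> x; split.
    move=> /Ssg_char hx j; apply/(Tsg_odd (k + 1 + j)); first lia.
    have := ltn_ord j; lia.
  move=> h; apply/Ssg_char.
  have := h (@Ordinal k.+1 k (ltnSn k)); move/(Tsg_odd (2 * k + 1)) => /= /(_ ltac:(lia)) hk'.
  case: (boolP (x %% 2 == 0)) => /eqP hx; first lia.
  case: (boolP ((2 * k + 3 <= x) && (x <= 4 * k + 1)))%N => hr; last lia.
  have hl : ((x - 2 * k - 3) %/ 2 < k.+1)%N by lia.
  have := h (Ordinal hl); move/(Tsg_odd ((x - 2 * k - 3) %/ 2 + k + 1)) => /= /(_ ltac:(lia)).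
  lia.
- move=> j0; exists (2 * k + 3 + 2 * j0); split.
    by move/Ssg_char; have := ltn_ord j0; lia.
  move=> j /eqP hj; apply/(Tsg_odd (k + 1 + j)); first lia.
  have hne : (nat_of_ord j <> nat_of_ord j0) by move=> e; apply: hj; apply: val_inj.
  have := ltn_ord j; have := ltn_ord j0; lia.
Qed.

Lemma Lm_pos S n : Lm S n -> (0 < n)%N.
Proof. by case. Qed.

Lemma rho_lb (R : realType) k : (0 < k)%N ->
  (((k.+1)%:R / 2 : R)%:E <= rhom R (Ssg (4 * k + 3)))%E.
Proof.
move=> hk.
rewrite /rhom.
set A := [set (n%:R : R)%:E | n in Lm (Ssg (4 * k + 3))].
have hs : (((k.+1)%:R : R)%:E <= ereal_sup A)%E.
  by apply: ereal_sup_ubound; exists k.+1 => //; exact: Lmk.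
have hi2 : (ereal_inf A <= (2%:R : R)%:E)%E.
  by apply: ereal_inf_lbound; exists 2%N => //; exact: Lm2.
have hi1 : ((1 : R)%:E <= ereal_inf A)%E.
  apply/ereal_infP => y [n hn <-]; rewrite lee_fin ler1n; exact: Lm_pos hn.
have fin : ereal_inf A \is a fin_num.
  apply/fin_numPlt; apply/andP; split.
    by apply: lt_le_trans hi1; rewrite ltNye.
  by apply: (le_lt_trans hi2); exact: ltry.
set r := fine (ereal_inf A).
have hr : r%:E = ereal_inf A := fineK fin.
rewrite -hr lee_fin in hi1; rewrite -hr lee_fin in hi2.
have r0 : (0 < r)%R by apply: lt_le_trans hi1.
have h0 : (0 <= (r^-1)%:E)%E by rewrite lee_fin invr_ge0 ltW.
apply: le_trans (lee_wpmul2r h0 hs).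
rewrite lee_fin; apply: ler_wpM2l => //.
by rewrite lef_pV2 // posrE.
Qed.

Theorem corollary2p4 (R : realType) :
  (forall B : R, exists i : nat,
      [/\ (7 <= i)%N, i %% 4 = 3 & (B%:E < rhom R (Ssg i))%E]) /\
  rhom_all R = +oo%E.
Proof.
have P1 : forall B : R, exists i : nat,
      [/\ (7 <= i)%N, i %% 4 = 3 & (B%:E < rhom R (Ssg i))%E].
  move=> B; set k := (Num.Def.truncn (2 * B)).+1.
  exists (4 * k + 3); split; [lia | lia |].
  apply: lt_le_trans (@rho_lb R k isT).
  rewrite lte_fin.
  have h := truncnS_gt (2 * B).
  have h2 : ((k%:R : R) < (k.+1)%:R)%R by rewrite ltr_nat.
  rewrite -/k in h; lra.
split => //.
rewrite /rhom_all.
have ub := @ereal_sup_ubound R [set rhom R S | S in numsg].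
have mem : forall i, (7 <= i)%N -> i %% 4 = 3 -> [set rhom R S | S in numsg] (rhom R (Ssg i)).
  move=> i hi hm; exists (Ssg i) => //.
  rewrite (_ : i = 4 * (i %/ 4) + 3)%N; last lia.
  exact: Ssg_numsg.
case E: (ereal_sup _) => [r| |] //.
  have [i [hi hm hl]] := P1 r.
  have := ub _ (mem i hi hm); rewrite E => hle.
  by have := lt_le_trans hl hle; rewrite ltxx.
have [i [hi hm hl]] := P1 0%R.
have := ub _ (mem i hi hm); rewrite E => hle.
have := lt_le_trans hl hle; by rewrite ltNge leNye.
Qed.
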